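(* Let $\gamma$ be a connected braid of $S^1\times\mathbb{D}^2$ with $|n_\gamma|\ge2$. Then every canonical solenoid map associated to $\gamma$ belongs to $\mathcal{U}^{part.hyp}_\gamma$. In particular $\mathcal{U}^{part.hyp}_\gamma$ is non-empty.
   Context: $S^1=\mathbb{R}/\mathbb{Z}$, $\mathbb{D}^2$ the closed unit disk. A connected braid $\gamma$ is (the isotopy class of) an embedding $S^1\to S^1\times\mathbb{D}^2$ transverse to the disks $\{\theta\}\times\mathbb{D}^2$, with $n=n_\gamma\ne0$ the degree of the covering induced by projection to $S^1$. A canonical solenoid map associated to $\gamma$ is built as follows: choose a representative of the braid of the form $t\mapsto(n t, z(t))$, and $\delta>0$ such that for all $t$, $d(z(t),\partial\mathbb{D}^2)>2\delta$, and such that $t_1\ne t_2$, $nt_1=nt_2$ in $S^1$ imply $d(z(t_1),z(t_2))>2\delta$; then $f_{\gamma,\delta}(t,z)=(nt,\delta z+z(t))$. $\mathcal{U}_\gamma$: $C^1$ embeddings $f:S^1\times\mathbb{D}^2\to\mathrm{Int}(S^1\times\mathbb{D}^2)$ with $f(S^1\times\{0\})$ isotopic to $\gamma$. $\mathcal{C}_\alpha(x)=\{(u_1,u_2)\in\mathbb{R}\times\mathbb{R}^2:|u_2|\le\alpha|u_1|\}$. $\mathcal{U}^{part.hyp}_\gamma$: those $f\in\mathcal{U}_\gamma$ with $\alpha>0$, integer $\ell\ge1$, $\lambda>1$ such that $Df^\ell(\mathcal{C}_\alpha(x))\subset\mathcal{C}_\beta(f^\ell(x))$ for some $\beta<\alpha$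 and $|v_1|\ge\lambda|u_1|$ whenever $u\in\mathcal{C}_\alpha(x)$, $Df^\ell u=(v_1,v_2)$. *)

(* Defs.v *)
(* The solid torus S^1 x D^2 (S^1 = R/Z) is modelled
   through lifts: a point is a vector x : 'rV[R]_3, x 0 0 being a lift of the
   S^1-coordinate and (x 0 1, x 0 2) the D^2-coordinate.  Maps of the solid torus
   and curves S^1 -> S^1 x D^2 are represented by lifts that descend to the
   quotient. *)
From HB Require Import structures.
From mathcomp Require Import all_boot all_order all_algebra.
From mathcomp Require Import all_classical all_reals all_analysis.
Set Implicit Arguments. Unset Strict Implicit. Unset Printing Implicit Defensive.
Import Order.TTheory GRing.Theory Num.Theory.
Import numFieldNormedType.Exports.
Local Open Scope classical_set_scope.
Local Open Scope ring_scope.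

Section SolidTorus.
Variable R : realType.

Definition pt (a b c : R) : 'rV[R]_3 := \row_(i < 3) [:: a; b; c]`_i.
Definition thc (x : 'rV[R]_3) : R := x 0 0.
Definition w1c (x : 'rV[R]_3) : R := x 0 1.
Definition w2c (x : 'rV[R]_3) : R := x 0 2.

Definition enorm2 (a b : R) : R := Num.sqrt (a ^+ 2 + b ^+ 2).

Definition same_circle (a b : R) : Prop := exists k : int, b = a + k%:~R.

Definition eqST (x y : 'rV[R]_3) : Prop :=
  same_circle (thc x) (thc y) /\ w1c x = w1c y /\ w2c x = w2c y.

Definition solidT : set 'rV[R]_3 := [set x | enorm2 (w1c x) (w2c x) <= 1].
Definition int_solidT : set 'rV[R]_3 := [set x | enorm2 (w1c x) (w2c x) < 1].

Definition circle_embedding (g : R -> 'rV[R]_3) : Prop :=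
  continuous g /\
  (forall t, eqST (g t) (g (t + 1))) /\
  (forall t, solidT (g t)) /\
  (forall s t, eqST (g s) (g t) -> same_circle s t).

Definition isotopic (g0 g1 : R -> 'rV[R]_3) : Prop :=
  exists H : R -> R -> 'rV[R]_3,
    {within [set p : R * R | 0 <= p.1 <= 1], continuous (fun p => H p.1 p.2)} /\
    (forall s, 0 <= s <= 1 -> circle_embedding (H s)) /\
    (forall t, H 0 t = g0 t) /\ (forall t, H 1 t = g1 t).

Definition C1_on (F : 'rV[R]_3 -> 'rV[R]_3) (D : set 'rV[R]_3) : Prop :=
  (forall x, D x -> differentiable F x) /\
  (forall v : 'rV[R]_3, {within D, continuous (fun x => 'D_v F x)}).

Definition solid_torus_embedding (F : 'rV[R]_3 -> 'rV[R]_3) : Prop :=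
  C1_on F solidT /\
  (forall x y, solidT x -> solidT y -> eqST x y -> eqST (F x) (F y)) /\
  (forall x y, solidT x -> solidT y -> eqST (F x) (F y) -> eqST x y) /\
  (forall x, solidT x -> int_solidT (F x)).

Definition U_gamma (g : R -> 'rV[R]_3) (F : 'rV[R]_3 -> 'rV[R]_3) : Prop :=
  solid_torus_embedding F /\ isotopic (fun t => F (pt t 0 0)) g.

Definition in_cone (alpha : R) (u : 'rV[R]_3) : Prop :=
  enorm2 (u 0 1) (u 0 2) <= alpha * `|u 0 0|.

Definition U_part_hyp (g : R -> 'rV[R]_3) (F : 'rV[R]_3 -> 'rV[R]_3) : Prop :=
  U_gamma g F /\
  exists (alpha : R) (l : nat) (lambda : R),
    0 < alpha /\ (1 <= l)%N /\ 1 < lambda /\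
    forall x, solidT x ->
      (exists beta : R, beta < alpha /\
         forall u, in_cone alpha u -> in_cone beta ('d (iter l F) x u)) /\
      (forall u, in_cone alpha u ->
         lambda * `|u 0 0| <= `|('d (iter l F) x u) 0 0|).

Definition C1_fun (h : R -> R) : Prop :=
  (forall t, derivable h t 1) /\ continuous (derive1 h).

Definition braid_rep (n : int) (z1 z2 : R -> R) : R -> 'rV[R]_3 :=
  fun t => pt (n%:~R * t) (z1 t) (z2 t).

Definition canonical_solenoid (n : int) (z1 z2 : R -> R) (delta : R)
  : 'rV[R]_3 -> 'rV[R]_3 :=
  fun x => pt (n%:~R * thc x) (delta * w1c x + z1 (thc x))
              (delta * w2c x + z2 (thc x)).

End SolidTorus.

(* Main.v *)
Require Import Defs.
From HB Require Import structures.
From mathcomp Require Import all_boot all_order all_algebra.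
From mathcomp Require Import all_classical all_reals all_analysis.
From mathcomp Require Import ring lra zify.
Import Order.TTheory GRing.Theory Num.Theory.
Import numFieldNormedType.Exports.
Local Open Scope classical_set_scope.
Local Open Scope ring_scope.

Set Implicit Arguments. Unset Strict Implicit. Unset Printing Implicit Defensive.

Section S1. Variable R : realType.
Local Notation en := (@enorm2 R).
Lemma sqr_normr (x : R) : `|x| ^+ 2 = x ^+ 2. Proof. exact: real_normK (num_real x). Qed.

Lemma sqrt_le_pos (x c : R) : 0 <= c -> x <= c ^+ 2 -> Num.sqrt x <= c.
Proof.
move=> c0 xc; have x2 : 0 <= c ^+ 2 by rewrite sqr_ge0.
by rewrite -(ger0_norm c0) -sqrtr_sqr ler_sqrt.
Qed.

Lemma en_ge0 a b : 0 <= en a b. Proof. exact: sqrtr_ge0. Qed.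
Lemma en_sq a b : en a b ^+ 2 = a ^+ 2 + b ^+ 2.
Proof. by rewrite sqr_sqrtr // addr_ge0 // sqr_ge0. Qed.

Lemma en_abs1 a b : `|a| <= en a b.
Proof.
have h : `|a| ^+ 2 <= en a b ^+ 2 by rewrite en_sq sqr_normr; have := sqr_ge0 b; lra.
by rewrite -(ler_pXn2r (n:=2)) // ?nnegrE ?en_ge0.
Qed.
Lemma en_abs2 a b : `|b| <= en a b.
Proof.
have h : `|b| ^+ 2 <= en a b ^+ 2 by rewrite en_sq sqr_normr; have := sqr_ge0 a; lra.
by rewrite -(ler_pXn2r (n:=2)) // ?nnegrE ?en_ge0.
Qed.

Lemma en_le_abs a b : en a b <= `|a| + `|b|.
Proof.
apply: sqrt_le_pos; first by rewrite addr_ge0.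
rewrite sqrrD !sqr_normr; have : 0 <= `|a| * `|b| by rewrite mulr_ge0.
rewrite -mulr_natr; nra.
Qed.

Lemma en_scale k a b : 0 <= k -> en (k * a) (k * b) = k * en a b.
Proof.
move=> k0; rewrite /enorm2 !exprMn -mulrDr sqrtrM ?sqr_ge0 //.
by rewrite sqrtr_sqr ger0_norm.
Qed.

Lemma en_opp a b : en (- a) (- b) = en a b.
Proof. by rewrite /enorm2 !sqrrN. Qed.

Lemma en_eq0 a b : en a b = 0 -> a = 0 /\ b = 0.
Proof.
move=> h; have : en a b ^+ 2 = 0 by rewrite h expr0n.
rewrite en_sq => /eqP; rewrite paddr_eq0 ?sqr_ge0 // !sqrf_eq0 => /andP[/eqP -> /eqP ->].
by [].
Qed.

Lemma en_tri a b c d : en (a + b) (c + d) <= en a c + en b d.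
Proof.
apply: sqrt_le_pos; first by rewrite addr_ge0 ?en_ge0.
have cs : a * b + c * d <= en a c * en b d.
  have h0 : 0 <= en a c * en b d by rewrite mulr_ge0 ?en_ge0.
  have h1 : (a * b + c * d) ^+ 2 <= (en a c * en b d) ^+ 2.
    rewrite exprMn !en_sq; have := sqr_ge0 (a * d - b * c); nra.
  case: (lerP (a * b + c * d) 0) => h; first by apply: le_trans h h0.
  by rewrite -(ler_pXn2r (n:=2)) // ?nnegrE // ltW.
rewrite [X in _ <= X]sqrrD !en_sq -mulr_natr; nra.
Qed.

End S1.


Section S2. Variable R : realType.

Lemma ptE (a b c : R) : pt a b c = a *: pt 1 0 0 + b *: pt 0 1 0 + c *: pt 0 0 1.
Proof.
apply/rowP => i; rewrite !mxE.
by case: i => [[|[|[|//]]] ?]; cbn [nth nat_of_ord]; rewrite ?mulr1 ?mulr0 ?addr0 ?add0r.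
Qed.

Lemma ptc0 a b c : (pt a b c : 'rV[R]_3) 0 0 = a. Proof. by rewrite mxE. Qed.
Lemma ptc1 a b c : (pt a b c : 'rV[R]_3) 0 1 = b. Proof. by rewrite mxE. Qed.
Lemma ptc2 a b c : (pt a b c : 'rV[R]_3) 0 2 = c. Proof. by rewrite mxE. Qed.

Lemma dcoord (i : 'I_3) (x : 'rV[R]_3) :
  'd (fun N : 'rV[R]_3 => N 0 i) x = (fun u : 'rV[R]_3 => u 0 i) :> (_ -> _).
Proof.
have @f : {linear 'rV[R]_3 -> R}.
  by exists (fun N : 'rV[R]_3 => N 0 i); do 2![eexists]; do ?[constructor];
     rewrite ?mxE// => ? *; rewrite ?mxE//; move=> ?; rewrite !mxE.
rewrite (_ : (fun _ => _) = f) //; rewrite diff_lin //.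
exact: coord_continuous.
Qed.

Lemma dsum3 (V W : normedModType R) (A B C : V -> R) (e0 e1 e2 : W) p :
  differentiable A p -> differentiable B p -> differentiable C p ->
  differentiable (fun y => A y *: e0 + B y *: e1 + C y *: e2) p /\
  'd (fun y => A y *: e0 + B y *: e1 + C y *: e2) p =
     (fun u => 'd A p u *: e0 + 'd B p u *: e1 + 'd C p u *: e2) :> (_ -> _).
Proof.
move=> dA dB dC.
have d1 : differentiable (fun y => A y *: e0) p by apply: differentiableZl.
have d2 : differentiable (fun y => B y *: e1) p by apply: differentiableZl.
have d3 : differentiable (fun y => C y *: e2) p by apply: differentiableZl.
have D := differentiableD (differentiableD d1 d2) d3.
have E := diffD (differentiableD d1 d2) d3.
have E2 := diffD d1 d2.
have E3 := diffZl e0 dA.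
have E4 := diffZl e1 dB.
have E5 := diffZl e2 dC.
split => //.
apply/funext => h.
apply: (etrans (congr1 (fun g => g h) E)).
apply: (etrans (congr1 (fun w => w + _) (congr1 (fun g => g h) E2))).
congr (_ + _ + _).
- exact: (congr1 (fun g => g h) E3).
- exact: (congr1 (fun g => g h) E4).
- exact: (congr1 (fun g => g h) E5).
Qed.

Lemma cont3 (T : topologicalType) (W : normedModType R) (A B C : T -> R) (e0 e1 e2 : W) :
  continuous A -> continuous B -> continuous C ->
  continuous (fun y => A y *: e0 + B y *: e1 + C y *: e2).
Proof.
move=> cA cB cC x.
have h1 : {for x, continuous (fun y => A y *: e0)} by exact: continuousZr_tmp (cA x).
have h2 : {for x, continuous (fun y => B y *: e1)} by exact: continuousZr_tmp (cB x).
have h3 : {for x, continuous (fun y => C y *: e2)} by exact: continuousZr_tmp (cC x).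
exact: (continuousD (continuousD h1 h2) h3).
Qed.

Lemma pt_cont (T : topologicalType) (A B C : T -> R) :
  continuous A -> continuous B -> continuous C ->
  continuous (fun y => (pt (A y) (B y) (C y) : 'rV[R]_3)).
Proof.
move=> cA cB cC.
have -> : (fun y => (pt (A y) (B y) (C y) : 'rV[R]_3)) =
   (fun y => A y *: (pt 1 0 0 : 'rV[R]_3) + B y *: pt 0 1 0 + C y *: pt 0 0 1).
  by apply/funext => y; rewrite ptE.
exact: cont3.
Qed.

Lemma dcomp_coord (g : R -> R) (j : 'I_3) (x : 'rV[R]_3) :
  derivable g (x 0 j) 1 ->
  differentiable (fun y : 'rV[R]_3 => g (y 0 j)) x /\
  'd (fun y : 'rV[R]_3 => g (y 0 j)) x = (fun h : 'rV[R]_3 => h 0 j * derive1 g (x 0 j)) :> (_ -> _).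
Proof.
move=> /derivable1_diffP dg.
have dc := differentiable_coord x 0 j.
have D := differentiable_comp dc dg.
split; first exact: D.
have E := diff_comp dc dg.
have E1 := diff1E dg.
have E2 := dcoord j x.
apply/funext => h.
apply: (etrans (congr1 (fun f => f h) E)) => /=.
apply: (etrans (congr1 (fun f => f ('d (fun N : 'rV[R]_3 => N 0 j) x h)) E1)) => /=.
by rewrite (congr1 (fun f => f h) E2).
Qed.


Lemma dpt (F : 'rV[R]_3 -> 'rV[R]_3) (A B C : 'rV[R]_3 -> R) (x : 'rV[R]_3) :
  (forall y, F y = pt (A y) (B y) (C y)) ->
  differentiable A x -> differentiable B x -> differentiable C x ->
  differentiable F x /\
  forall h, 'd F x h = pt ('d A x h) ('d B x h) ('d C x h).
Proof.
move=> eF dA dB dC.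
have -> : F = (fun y => A y *: (pt 1 0 0 : 'rV[R]_3) + B y *: pt 0 1 0 + C y *: pt 0 0 1).
  by apply/funext => y; rewrite eF ptE.
have [D E] := dsum3 (pt 1 0 0 : 'rV[R]_3) (pt 0 1 0) (pt 0 0 1) dA dB dC.
split; first exact: D.
move=> h; rewrite [RHS]ptE.
exact: (congr1 (fun f => f h) E).
Qed.

Lemma dscal (f : 'rV[R]_3 -> R) (a b : R) (i j : 'I_3) (g : R -> R) (x : 'rV[R]_3) :
  (forall y, f y = a * y 0 i + b * g (y 0 j)) ->
  derivable g (x 0 j) 1 ->
  differentiable f x /\
  forall h, 'd f x h = a * h 0 i + b * (h 0 j * derive1 g (x 0 j)).
Proof.
move=> ef dg.
have -> : f = (fun y : 'rV[R]_3 => y 0 i *: a + g (y 0 j) *: b + y 0 i *: (0 : R)).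
  apply/funext => y; rewrite ef; rewrite /GRing.scale /=.
  by rewrite mulr0 addr0 (mulrC a) (mulrC b).
have [dg' Eg] := dcomp_coord dg.
have dc := differentiable_coord x 0 i.
have [D E] := dsum3 a b (0 : R) dc dg' dc.
split; first exact: D.
move=> h.
apply: (etrans (congr1 (fun f => f h) E)) => /=.
rewrite (congr1 (fun f => f h) Eg) (congr1 (fun f => f h) (dcoord i x)).
by rewrite /GRing.scale /= mulr0 addr0 (mulrC a) (mulrC b).
Qed.

Lemma dF (n : int) (z1 z2 : R -> R) (delta : R) (x : 'rV[R]_3) :
  (forall t, derivable z1 t 1) -> (forall t, derivable z2 t 1) ->
  differentiable (canonical_solenoid n z1 z2 delta) x /\
  forall h, 'd (canonical_solenoid n z1 z2 delta) x h =
    pt (n%:~R * h 0 0) (delta * h 0 1 + h 0 0 * derive1 z1 (x 0 0))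
       (delta * h 0 2 + h 0 0 * derive1 z2 (x 0 0)).
Proof.
move=> d1 d2.
have [dA EA] := @dscal (fun y => n%:~R * thc y) n%:~R 0 0 0 z1 x
   (fun y => esym (etrans (congr1 _ (mul0r _)) (addr0 _))) (d1 _).
have [dB EB] := @dscal (fun y => delta * w1c y + z1 (thc y)) delta 1 1 0 z1 x
   (fun y => congr1 _ (esym (mul1r _))) (d1 _).
have [dC EC] := @dscal (fun y => delta * w2c y + z2 (thc y)) delta 1 2 0 z2 x
   (fun y => congr1 _ (esym (mul1r _))) (d2 _).
have [D E] := @dpt (canonical_solenoid n z1 z2 delta) _ _ _ x (fun y => erefl) dA dB dC.
split; first exact: D.
move=> h; rewrite E EA EB EC.
by rewrite !mul0r !addr0 !mul1r.
Qed.

End S2.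


Section S3. Variable R : realType.

Lemma per_nat (f : R -> R) : (forall t, f (t + 1) = f t) ->
  forall (m : nat) t, f (t + m%:R) = f t.
Proof.
move=> hf; elim=> [|m IH] t; first by rewrite addr0.
by rewrite -natr1 addrA hf IH.
Qed.

Lemma per_int (f : R -> R) : (forall t, f (t + 1) = f t) ->
  forall (k : int) t, f (t + k%:~R) = f t.
Proof.
move=> hf [m|m] t; first exact: per_nat.
rewrite NegzE mulrNz.
by rewrite -[in RHS](subrK ((m.+1)%:~R) t) [in RHS]per_nat.
Qed.

Lemma frac_dec (t : R) : exists (k : int) (s : R), 0 <= s < 1 /\ t = s + k%:~R.
Proof.
exists (Num.floor t), (t - (Num.floor t)%:~R); split; last by rewrite subrK.
have /andP[h1 h2] := floor_itv t.
rewrite intrD in h2.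
apply/andP; split; lra.
Qed.

Lemma derive1_per (f : R -> R) : (forall t, f (t + 1) = f t) ->
  forall t, derive1 f (t + 1) = derive1 f t.
Proof.
move=> hf t; rewrite /derive1.
have -> : (fun h => h^-1 *: (f (h + (t + 1)) - f (t + 1))) =
          (fun h => h^-1 *: (f (h + t) - f t)).
  by apply/funext => h; rewrite addrA !hf.
by [].
Qed.

Lemma bound_deriv (z1 z2 : R -> R) : C1_fun z1 -> C1_fun z2 ->
  (forall t, z1 (t + 1) = z1 t /\ z2 (t + 1) = z2 t) ->
  exists K : R, 0 <= K /\ forall t, `|derive1 z1 t| + `|derive1 z2 t| <= K.
Proof.
move=> [_ c1] [_ c2] hp.
have p1 := derive1_per (fun t => proj1 (hp t)).
have p2 := derive1_per (fun t => proj2 (hp t)).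
have q1 := per_int p1. have q2 := per_int p2.
pose G t := `|derive1 z1 t| + `|derive1 z2 t|.
have cG : continuous G.
  move=> x.
  have h1 : {for x, continuous (fun t => `|derive1 z1 t|)}.
    exact: (continuous_comp (c1 x) (@norm_continuous _ _ _)).
  have h2 : {for x, continuous (fun t => `|derive1 z2 t|)}.
    exact: (continuous_comp (c2 x) (@norm_continuous _ _ _)).
  exact: (continuousD h1 h2).
have cW : {within `[(0:R), 1], continuous G} by apply: continuous_subspaceT.
have [c _ hc] := @EVT_max R G 0 1 ler01 cW.
exists (G c); split; first by rewrite /G addr_ge0.
move=> t; have [k [s [/andP[s0 s1] ->]]] := frac_dec t.
rewrite q1 q2; apply: (hc s).
by rewrite in_itv /= s0 ltW.
Qed.
End S3.


Section S4. Variable R : realType.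
Local Notation en := (@enorm2 R).

Lemma thcF n z1 z2 delta (x : 'rV[R]_3) :
  thc (canonical_solenoid n z1 z2 delta x) = n%:~R * thc x.
Proof. by rewrite /thc /canonical_solenoid ptc0. Qed.
Lemma w1F n z1 z2 delta (x : 'rV[R]_3) :
  w1c (canonical_solenoid n z1 z2 delta x) = delta * w1c x + z1 (thc x).
Proof. by rewrite /w1c /canonical_solenoid ptc1. Qed.
Lemma w2F n z1 z2 delta (x : 'rV[R]_3) :
  w2c (canonical_solenoid n z1 z2 delta x) = delta * w2c x + z2 (thc x).
Proof. by rewrite /w2c /canonical_solenoid ptc2. Qed.

Lemma Nabs_ge2 (n : int) : (2 <= `|n|)%N -> 2 <= `|(n%:~R : R)|.
Proof.
move=> h; rewrite -intr_norm -natr_absz.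
by rewrite (ler_nat R 2).
Qed.

Lemma cont_aff (T : topologicalType) (A : T -> R) (c k : R) :
  continuous A -> continuous (fun x => c + k * A x).
Proof.
move=> cA.
have -> : (fun x => c + k * A x) =
   (fun x => (fun _ => 1) x *: c + A x *: k + (fun _ => 0) x *: (0 : R)).
  apply/funext => x /=; rewrite /GRing.scale /=.
  by rewrite mul1r mulr0 addr0 mulrC.
apply: cont3 => //; exact: cst_continuous.
Qed.

Lemma stE (n : int) (z1 z2 : R -> R) (delta : R) :
  (2 <= `|n|)%N -> C1_fun z1 -> C1_fun z2 ->
  (forall t, z1 (t + 1) = z1 t /\ z2 (t + 1) = z2 t) ->
  0 < delta ->
  (forall t, 1 - enorm2 (z1 t) (z2 t) > 2 * delta) ->
  (forall t1 t2, ~ same_circle t1 t2 ->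
     same_circle (n%:~R * t1) (n%:~R * t2) ->
     enorm2 (z1 t1 - z1 t2) (z2 t1 - z2 t2) > 2 * delta) ->
  solid_torus_embedding (canonical_solenoid n z1 z2 delta).
Proof.
move=> hn [d1 c1] [d2 c2] hp dpos hz hsep.
have q1 := per_int (fun t => proj1 (hp t)).
have q2 := per_int (fun t => proj2 (hp t)).
set F := canonical_solenoid n z1 z2 delta.
split; [split|split; [|split]].
- by move=> x _; case: (dF n delta x d1 d2).
- move=> v; apply: continuous_subspaceT.
  have -> : (fun x => 'D_v F x) = (fun x : 'rV[R]_3 =>
     pt (n%:~R * v 0 0) (delta * v 0 1 + v 0 0 * derive1 z1 (x 0 0))
        (delta * v 0 2 + v 0 0 * derive1 z2 (x 0 0))).
    apply/funext => x; have [D E] := dF n delta x d1 d2.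
    by rewrite deriveE // E.
  apply: pt_cont.
  + exact: cst_continuous.
  + apply: cont_aff => x.
    exact: (continuous_comp (@coord_continuous R 1 3 0 0 x) (c1 _)).
  + apply: cont_aff => x.
    exact: (continuous_comp (@coord_continuous R 1 3 0 0 x) (c2 _)).
- move=> x y _ _ [[k hk] [e1 e2]].
  split; last split.
  + rewrite !thcF hk; exists (n * k); rewrite intrM; ring.
  + by rewrite !w1F hk q1 e1.
  + by rewrite !w2F hk q2 e2.
- move=> x y hx hy [[k hk] [e1 e2]].
  rewrite !w1F in e1; rewrite !w2F in e2; rewrite !thcF in hk.
  case: (pselect (same_circle (thc x) (thc y))) => hs.
  * split; first exact: hs.
    case: hs => j hj.
    rewrite hj q1 in e1; rewrite hj q2 in e2.
    have dn : delta != 0 by rewrite gt_eqF.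
    split; apply: (mulfI dn); [exact: (addIr _ e1)|exact: (addIr _ e2)].
  * exfalso.
    have := hsep _ _ hs (ex_intro _ k hk).
    have -> : z1 (thc x) - z1 (thc y) = delta * (w1c y + - w1c x) by lra.
    have -> : z2 (thc x) - z2 (thc y) = delta * (w2c y + - w2c x) by lra.
    rewrite (en_scale _ _ (ltW dpos)).
    have t1 := en_tri (w1c y) (- w1c x) (w2c y) (- w2c x).
    rewrite en_opp in t1.
    move: hx hy; rewrite /solidT /= => hx hy.
    rewrite /w1c /w2c in t1 *.
    nra.
- move=> x hx; rewrite /int_solidT /= -/(w1c _) -/(w2c _) w1F w2F.
  have t1 := en_tri (delta * w1c x) (z1 (thc x)) (delta * w2c x) (z2 (thc x)).
  rewrite (en_scale _ _ (ltW dpos)) in t1.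
  move: hx; rewrite /solidT /= => hx.
  have := hz (thc x).
  rewrite /w1c /w2c in t1 hx *.
  have := en_ge0 (z1 (thc x)) (z2 (thc x)).
  nra.
Qed.
End S4.


Section S5. Variable R : realType.
Local Notation en := (@enorm2 R).

Lemma coneE (n : int) (z1 z2 : R -> R) (delta : R) :
  (2 <= `|n|)%N -> C1_fun z1 -> C1_fun z2 ->
  (forall t, z1 (t + 1) = z1 t /\ z2 (t + 1) = z2 t) ->
  0 < delta -> 2 * delta < 1 ->
  exists (alpha : R) (l : nat) (lambda : R),
    0 < alpha /\ (1 <= l)%N /\ 1 < lambda /\
    forall x, solidT x ->
      (exists beta : R, beta < alpha /\
         forall u, in_cone alpha u ->
           in_cone beta ('d (iter l (canonical_solenoid n z1 z2 delta)) x u)) /\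
      (forall u, in_cone alpha u ->
         lambda * `|u 0 0| <= `|('d (iter l (canonical_solenoid n z1 z2 delta)) x u) 0 0|).
Proof.
move=> hn C1 C2 hp dpos d1.
have [K [K0 hK]] := bound_deriv C1 C2 hp.
case: C1 => dz1 _; case: C2 => dz2 _.
have N2 := Nabs_ge2 R hn.
set Na := `|(n%:~R : R)| in N2.
have Na0 : 0 < Na by lra.
exists (K + 1), 1%N, 2; split; first lra.
split => //; split; first lra.
move=> x _.
have [_ E] := dF n delta x dz1 dz2.
have E' : forall u, 'd (iter 1 (canonical_solenoid n z1 z2 delta)) x u =
    pt (n%:~R * u 0 0) (delta * u 0 1 + u 0 0 * derive1 z1 (x 0 0))
       (delta * u 0 2 + u 0 0 * derive1 z2 (x 0 0)) := E.
split.
- exists ((2 * delta * (K + 1) + K) / Na); split.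
    rewrite ltr_pdivrMr //; nra.
  move=> u hu; rewrite /in_cone E' ptc0 ptc1 ptc2 normrM -/Na.
  have -> : (2 * delta * (K + 1) + K) / Na * (Na * `|u 0 0|) =
            (2 * delta * (K + 1) + K) * `|u 0 0|.
    by field; rewrite gt_eqF.
  move: hu; rewrite /in_cone => hu.
  set a := derive1 z1 (x 0 0); set b := derive1 z2 (x 0 0).
  have f1 := en_le_abs (delta * u 0 1 + u 0 0 * a) (delta * u 0 2 + u 0 0 * b).
  have f2 : `|delta * u 0 1 + u 0 0 * a| <= delta * `|u 0 1| + `|u 0 0| * `|a|.
    apply: le_trans (ler_normD _ _) _; by rewrite !normrM (ger0_norm (ltW dpos)).
  have f3 : `|delta * u 0 2 + u 0 0 * b| <= delta * `|u 0 2| + `|u 0 0| * `|b|.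
    apply: le_trans (ler_normD _ _) _; by rewrite !normrM (ger0_norm (ltW dpos)).
  have f4 := en_abs1 (u 0 1) (u 0 2).
  have f5 := en_abs2 (u 0 1) (u 0 2).
  have g1 : delta * `|u 0 1| <= delta * ((K + 1) * `|u 0 0|).
    by rewrite ler_wpM2l ?(ltW dpos) // (le_trans f4 hu).
  have g2 : delta * `|u 0 2| <= delta * ((K + 1) * `|u 0 0|).
    by rewrite ler_wpM2l ?(ltW dpos) // (le_trans f5 hu).
  have g3 : `|u 0 0| * (`|a| + `|b|) <= `|u 0 0| * K.
    by rewrite ler_wpM2l // hK.
  nra.
- move=> u hu; rewrite E' ptc0 normrM -/Na.
  by rewrite ler_wpM2r.
Qed.
End S5.


Section S6. Variable R : realType.
Local Notation en := (@enorm2 R).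

Lemma cont_mul (T : topologicalType) (A B : T -> R) :
  continuous A -> continuous B -> continuous (fun x => A x * B x).
Proof. move=> cA cB x; exact: (continuousM (cA x) (cB x)). Qed.

Lemma C1_cont (z : R -> R) : C1_fun z -> continuous z.
Proof.
move=> [d _] x.
have dx : differentiable z x by apply/derivable1_diffP; exact: d.
exact: differentiable_continuous dx.
Qed.

Lemma cemb_scale (n : int) (z1 z2 : R -> R) (c : R) :
  circle_embedding (braid_rep n z1 z2) -> C1_fun z1 -> C1_fun z2 ->
  (forall t, z1 (t + 1) = z1 t /\ z2 (t + 1) = z2 t) ->
  0 < c <= 1 ->
  circle_embedding (fun t => pt (n%:~R * t) (c * z1 t) (c * z2 t)).
Proof.
move=> [_ [_ [hs hi]]] C1 C2 hp /andP[c0 c1].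
split; [|split; [|split]].
- apply: pt_cont.
  + apply: cont_mul; [exact: cst_continuous|by move=> ?; exact: cvg_id].
  + apply: cont_mul; [exact: cst_continuous|exact: C1_cont].
  + apply: cont_mul; [exact: cst_continuous|exact: C1_cont].
- move=> t; rewrite /eqST /thc /w1c /w2c !ptc0 !ptc1 !ptc2.
  split; first by exists n; rewrite mulrDr mulr1.
  by case: (hp t) => -> ->.
- move=> t; rewrite /solidT /= /w1c /w2c !ptc1 !ptc2 (en_scale _ _ (ltW c0)).
  have := hs t; rewrite /solidT /= /w1c /w2c /braid_rep ptc1 ptc2 => h.
  have := en_ge0 (z1 t) (z2 t); nra.
- move=> s t; rewrite /eqST /thc /w1c /w2c !ptc0 !ptc1 !ptc2 => [[h1 [h2 h3]]].
  apply: hi; rewrite /eqST /thc /w1c /w2c /braid_rep !ptc0 !ptc1 !ptc2.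
  have cn : c != 0 by rewrite gt_eqF.
  by split => //; split; apply: (mulfI cn).
Qed.

Lemma iso_scale (n : int) (z1 z2 : R -> R) (c0 c1 : R) (g0 g1 : R -> 'rV[R]_3) :
  circle_embedding (braid_rep n z1 z2) -> C1_fun z1 -> C1_fun z2 ->
  (forall t, z1 (t + 1) = z1 t /\ z2 (t + 1) = z2 t) ->
  0 < c0 <= 1 -> 0 < c1 <= 1 ->
  (forall t, g0 t = pt (n%:~R * t) (c0 * z1 t) (c0 * z2 t)) ->
  (forall t, g1 t = pt (n%:~R * t) (c1 * z1 t) (c1 * z2 t)) ->
  isotopic g0 g1.
Proof.
move=> ce C1 C2 hp hc0 hc1 e0 e1.
exists (fun s t => pt (n%:~R * t) ((c0 + (c1 - c0) * s) * z1 t)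
                      ((c0 + (c1 - c0) * s) * z2 t)).
split; [|split; [|split]].
- apply: continuous_subspaceT.
  have cf : continuous (@fst R R) by move=> p; exact: cvg_fst.
  have cs : continuous (@snd R R) by move=> p; exact: cvg_snd.
  have hc : continuous (fun p : R * R => c0 + (c1 - c0) * p.1).
    exact: (@cont_aff R _ fst _ _ cf).
  have h1 : continuous (fun p : R * R => z1 p.2).
    by move=> p; apply: continuous_comp; [exact: cs|exact: C1_cont].
  have h2 : continuous (fun p : R * R => z2 p.2).
    by move=> p; apply: continuous_comp; [exact: cs|exact: C1_cont].
  have h0 : continuous (fun p : R * R => n%:~R * p.2).
    apply: (cont_mul (A := fun _ => n%:~R)); [exact: cst_continuous|exact: cs].
  exact: (pt_cont h0 (cont_mul hc h1) (cont_mul hc h2)).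
- move=> s /andP[s0 s1]; apply: cemb_scale => //.
  move: hc0 hc1 => /andP[a0 a1] /andP[b0 b1].
  apply/andP; split; nra.
- by move=> t; rewrite e0 mulr0 addr0.
- by move=> t; rewrite e1 mulr1 addrC subrK.
Qed.
End S6.


Section S7. Variable R : realType.
Local Notation en := (@enorm2 R).

Lemma cont_add (T : topologicalType) (A B : T -> R) :
  continuous A -> continuous B -> continuous (fun x => A x + B x).
Proof. move=> cA cB x; exact: (continuousD (cA x) (cB x)). Qed.

Lemma cont_sub (T : topologicalType) (A B : T -> R) :
  continuous A -> continuous B -> continuous (fun x => A x - B x).
Proof. move=> cA cB x; exact: (continuousB (cA x) (cB x)). Qed.

Lemma cont_shift (z : R -> R) (s : R) : continuous z -> continuous (fun t => z (t + s)).
Proof.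
move=> cz.
have cs : continuous (fun t : R => t + s).
  apply: cont_add; [by move=> ?; exact: cvg_id|exact: cst_continuous].
move=> x; exact: (continuous_comp (cs x) (cz _)).
Qed.

Lemma int_lt_abs (k i n : int) : 0 < k -> k < `|n|%:Z -> k = i * n -> False.
Proof.
move=> k0 kn e; rewrite e in k0 kn.
case: (ltrgtP n 0) => hn; case: (ltrgtP i 0) => hi; nia.
Qed.


Definition D2 (z1 z2 : R -> R) (s t : R) :=
  (z1 t - z1 (t + s)) ^+ 2 + (z2 t - z2 (t + s)) ^+ 2.

Lemma D2_pos (n k : int) (z1 z2 : R -> R) :
  n != 0 -> circle_embedding (braid_rep n z1 z2) -> 0 < k -> k < `|n|%:Z ->
  forall t, 0 < D2 z1 z2 (k%:~R / n%:~R) t.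
Proof.
move=> n0 [_ [_ [_ hi]]] k0 kn t.
have nR : (n%:~R : R) != 0 by rewrite intr_eq0.
rewrite lt_neqAle /D2 addr_ge0 ?sqr_ge0 // andbT.
apply/negP => /eqP h0.
move: (esym h0) => /eqP; rewrite paddr_eq0 ?sqr_ge0 // !sqrf_eq0 !subr_eq0.
move=> /andP[/eqP e1 /eqP e2].
have [i hi'] : same_circle t (t + k%:~R / n%:~R).
  apply: hi; rewrite /eqST /braid_rep /thc /w1c /w2c !ptc0 !ptc1 !ptc2.
  split; last by split.
  by exists k; field.
apply: (@int_lt_abs k i n) => //.
apply: (@intr_inj R); rewrite intrM.
have : k%:~R / n%:~R = (i%:~R : R) by lra.
move=> e; rewrite -e; field => //.
Qed.

Lemma D2_per (z1 z2 : R -> R) s :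
  (forall t, z1 (t + 1) = z1 t /\ z2 (t + 1) = z2 t) ->
  forall (j : int) t, D2 z1 z2 s (t + j%:~R) = D2 z1 z2 s t.
Proof.
move=> hp j t.
have q1 := per_int (fun t => proj1 (hp t)).
have q2 := per_int (fun t => proj2 (hp t)).
by rewrite /D2 (addrAC t) !q1 !q2.
Qed.

Lemma D2_min (z1 z2 : R -> R) s :
  continuous z1 -> continuous z2 ->
  (forall t, z1 (t + 1) = z1 t /\ z2 (t + 1) = z2 t) ->
  (forall t, 0 < D2 z1 z2 s t) ->
  exists m, 0 < m /\ forall t, m <= D2 z1 z2 s t.
Proof.
move=> c1 c2 hp hpos.
have cD : continuous (D2 z1 z2 s).
  rewrite /D2; apply: cont_add; rewrite /GRing.exp /=.
  - apply: cont_mul; apply: cont_sub => //; exact: cont_shift.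
  - apply: cont_mul; apply: cont_sub => //; exact: cont_shift.
have cW : {within `[(0:R), 1], continuous (D2 z1 z2 s)} by apply: continuous_subspaceT.
have [c _ hc] := @EVT_min R _ 0 1 ler01 cW.
exists (D2 z1 z2 s c); split => //.
move=> t; have [k [u [/andP[u0 u1] ->]]] := frac_dec t.
rewrite D2_per //; apply: hc.
by rewrite in_itv /= u0 ltW.
Qed.

Lemma sep_exists (n : int) (z1 z2 : R -> R) :
  (2 <= `|n|)%N -> C1_fun z1 -> C1_fun z2 ->
  (forall t, z1 (t + 1) = z1 t /\ z2 (t + 1) = z2 t) ->
  circle_embedding (braid_rep n z1 z2) ->
  exists e, 0 < e /\ forall t1 t2, ~ same_circle t1 t2 ->
    same_circle (n%:~R * t1) (n%:~R * t2) ->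
    e <= en (z1 t1 - z1 t2) (z2 t1 - z2 t2).
Proof.
move=> hn C1 C2 hp ce.
have n0 : n != 0 by apply/eqP => e; rewrite e in hn.
have nR : (n%:~R : R) != 0 by rewrite intr_eq0.
have c1 := C1_cont C1. have c2 := C1_cont C2.
have q1 := per_int (fun t => proj1 (hp t)).
have q2 := per_int (fun t => proj2 (hp t)).
have unif : forall K : nat, exists m, 0 < m /\ forall k : int, 0 < k -> k <= K%:Z ->
    k < `|n|%:Z -> forall t, m <= D2 z1 z2 (k%:~R / n%:~R) t.
  elim=> [|K [m [m0 hm]]].
    by exists 1; split => // k k0 kK; exfalso; lia.
  case: (boolP ((K.+1)%:Z < `|n|%:Z)) => hK.
    have K0 : (0 < (K.+1)%:Z) by [].
    have [m' [m'0 hm']] := D2_min (s := ((K.+1)%:Z)%:~R / n%:~R) c1 c2 hp (D2_pos n0 ce K0 hK).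
    exists (Num.min m m'); split; first by rewrite lt_min m0 m'0.
    move=> k k0 kK kn t.
    have [kl|ke] : k <= K%:Z \/ k = (K.+1)%:Z by lia.
      by rewrite ge_min hm.
    by rewrite ge_min ke hm' orbT.
  exists m; split => // k k0 kK kn t.
  apply: hm => //; lia.
have [m [m0 hm]] := unif `|n|%N.
exists (Num.sqrt m); split; first by rewrite sqrtr_gt0.
move=> t1 t2 hns [j hj].
have hjr := divz_eq j n.
set q := (j %/ n)%Z in hjr; set r := (j %% n)%Z in hjr.
have r0 : 0 <= r by apply: modz_ge0.
have rn : r < `|n|%:Z.
  have := ltz_mod j n0; rewrite -/r; lia.
have et2 : t2 = (t1 + r%:~R / n%:~R) + q%:~R.
  apply: (mulfI nR); rewrite hj hjr intrD intrM; by field.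
have [re|rpos] : r = 0 \/ 0 < r by lia.
  exfalso; apply: hns; exists q; rewrite et2 re mul0r addr0; by [].
have := hm r rpos (ltW rn) rn t1.
rewrite /D2 -(q1 q (t1 + _)) -(q2 q (t1 + _)) -et2 => h.
rewrite /enorm2; rewrite ler_sqrt //.
by rewrite addr_ge0 ?sqr_ge0.
Qed.

End S7.


Section S8. Variable R : realType.
Local Notation en := (@enorm2 R).

Lemma C1_scale (z : R -> R) (c : R) : C1_fun z -> C1_fun (fun t => c * z t).
Proof.
move=> [d cd]; split.
  move=> t; exact: (derivableZ (k:=c) (d t)).
have -> : derive1 (fun t => c * z t) = (fun t => c * derive1 z t).
  by apply/funext => t; rewrite derive1Ml.
apply: cont_mul => //; exact: cst_continuous.
Qed.

Lemma part1 (n : int) (w1 w2 z1 z2 : R -> R) (c delta : R) :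
  (2 <= `|n|)%N -> C1_fun z1 -> C1_fun z2 -> C1_fun w1 -> C1_fun w2 ->
  (forall t, z1 (t + 1) = z1 t /\ z2 (t + 1) = z2 t) ->
  (forall t, w1 (t + 1) = w1 t /\ w2 (t + 1) = w2 t) ->
  0 < c <= 1 -> (forall t, z1 t = c * w1 t /\ z2 t = c * w2 t) ->
  circle_embedding (braid_rep n w1 w2) ->
  0 < delta ->
  (forall t, 1 - enorm2 (z1 t) (z2 t) > 2 * delta) ->
  (forall t1 t2, ~ same_circle t1 t2 ->
     same_circle (n%:~R * t1) (n%:~R * t2) ->
     enorm2 (z1 t1 - z1 t2) (z2 t1 - z2 t2) > 2 * delta) ->
  U_part_hyp (braid_rep n w1 w2) (canonical_solenoid n z1 z2 delta).
Proof.
move=> hn C1 C2 W1 W2 hp hpw hc hzw ce dpos hz hsep.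
split; first split.
- exact: stE.
- apply: (@iso_scale R n w1 w2 c 1) => //.
  + by rewrite ltr01 lexx.
  + move=> t; rewrite /canonical_solenoid /thc /w1c /w2c ptc0 ptc1 ptc2 !mulr0 !add0r.
    by case: (hzw t) => -> ->.
  + by move=> t; rewrite /braid_rep !mul1r.
- apply: coneE => //.
  have := hz 0; have := en_ge0 (z1 0) (z2 0); lra.
Qed.
End S8.


Unset Implicit Arguments.

Theorem mainTheorem10 (R : realType) (n : int) (z1 z2 : R -> R) :
  (* gamma is a connected braid with |n_gamma| >= 2, given by the
     C^1 representative t |-> (n t, z(t)) *)
  (2 <= `|n|)%N ->
  C1_fun z1 -> C1_fun z2 ->
  (forall t, z1 (t + 1) = z1 t /\ z2 (t + 1) = z2 t) ->
  circle_embedding (braid_rep n z1 z2) ->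
  (* every canonical solenoid map f_{gamma,delta} is in U^{part.hyp}_gamma *)
  (forall delta : R,
    0 < delta ->
    (forall t, 1 - enorm2 (z1 t) (z2 t) > 2 * delta) ->
    (forall t1 t2, ~ same_circle t1 t2 ->
       same_circle (n%:~R * t1) (n%:~R * t2) ->
       enorm2 (z1 t1 - z1 t2) (z2 t1 - z2 t2) > 2 * delta) ->
    U_part_hyp (braid_rep n z1 z2) (canonical_solenoid n z1 z2 delta))
  /\
  (* in particular U^{part.hyp}_gamma is non-empty *)
  (exists F, U_part_hyp (braid_rep n z1 z2) F).
Proof.
move=> hn C1 C2 hp ce; split.
  move=> delta dpos hz hsep.
  apply: (@part1 R n z1 z2 z1 z2 1 delta) => //.
  - by rewrite ltr01 lexx.
  - by move=> t; rewrite !mul1r.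
have [e [e0 he]] := sep_exists hn C1 C2 hp ce.
pose d := Num.min 1 e / 8.
have m1 : Num.min 1 e <= 1 by rewrite ge_min lexx.
have m2 : Num.min 1 e <= e by rewrite ge_min lexx orbT.
have m0 : 0 < Num.min 1 e by rewrite lt_min ltr01 e0.
have h2 : (0 : R) < 2^-1 by rewrite invr_gt0.
have h21 : (2^-1 : R) <= 1 by rewrite invf_le1 // ler1n.
exists (canonical_solenoid n (fun t => 2^-1 * z1 t) (fun t => 2^-1 * z2 t) d).
apply: (@part1 R n z1 z2 _ _ 2^-1 d) => //.
- exact: C1_scale.
- exact: C1_scale.
- by move=> t; case: (hp t) => -> ->.
- by rewrite h2 h21.
- rewrite /d; lra.
- move=> t; rewrite (en_scale _ _ (ltW h2)).
  case: ce => [_ [_ [hs _]]].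
  have := hs t; rewrite /solidT /= /w1c /w2c /braid_rep ptc1 ptc2 => h.
  have := en_ge0 (z1 t) (z2 t).
  rewrite /d; nra.
- move=> t1 t2 hns hsc.
  rewrite -!mulrBr (en_scale _ _ (ltW h2)).
  have := he t1 t2 hns hsc.
  rewrite /d; nra.
Qed.
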